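(* For every $0<p<1$ we have $\frac12<\pi(p,p)<1$.
   Context: Let $\beta_1,\beta_2,\ldots$ be independent Bernoulli random variables with success probability $p$. A stake sequence is a sequence $\gamma=(c_1,c_2,\ldots)$ of non-negative reals with $c_1\ge c_2\ge\cdots$ and $\sum_i c_i=1$; write $S_\gamma=\sum_i c_i\beta_i$. For $0\le p\le t\le 1$ define $\pi(p,t)=\sup\{\mathbf P(S_\gamma\ge t)\mid \gamma \text{ a stake sequence}\}$. *)

(* Defs.v *)
From HB Require Import structures.
From mathcomp Require Import all_boot all_order all_algebra.
From mathcomp Require Import all_classical all_reals all_analysis.
Set Implicit Arguments. Unset Strict Implicit. Unset Printing Implicit Defensive.
Import Order.TTheory GRing.Theory Num.Theory numFieldNormedType.Exports.
Local Open Scope classical_set_scope.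
Local Open Scope ring_scope.

Section Defs.
Context (d : measure_display) (T : measurableType d) (R : realType)
        (P : probability T R).

Definition mutually_independent (X : nat -> T -> R) : Prop :=
  forall (J : seq nat) (B : nat -> set R),
    uniq J -> (forall j, measurable (B j)) ->
    P (\big[setI/setT]_(j <- J) (X j @^-1` B j)) =
    (\prod_(j <- J) P (X j @^-1` B j))%E.

Definition bernoulli_rv (p : R) (X : T -> R) : Prop :=
  measurable_fun setT X /\ (forall w, X w = 0 \/ X w = 1) /\
  P (X @^-1` [set 1]) = p%:E.

Definition stake_seq (c : nat -> R) : Prop :=
  (forall i, 0 <= c i) /\ (forall i, c i.+1 <= c i) /\
  (series c n @[n --> \oo] --> (1:R)).

Definition S_gamma (beta : nat -> T -> R) (c : nat -> R) (w : T) : R :=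
  limn (fun n => \sum_(i < n) c i * beta i w).

Definition pi_fun (beta : nat -> T -> R) (t : R) : \bar R :=
  ereal_sup [set P [set w | t <= S_gamma beta c w] | c in stake_seq].

End Defs.

(* Main.v *)
Set Warnings "-all".
Require Import Defs.
From HB Require Import structures.
From mathcomp Require Import all_boot all_order all_algebra.
From mathcomp Require Import all_classical all_reals all_analysis.
From mathcomp Require Import ring lra.
Import Order.TTheory GRing.Theory Num.Theory numFieldNormedType.Exports.
Local Open Scope classical_set_scope.
Local Open Scope ring_scope.

Section ExSec.
Variables (R : realType) (p : R).

Definition upd (x : nat -> R) (n : nat) (b : R) : nat -> R :=
  fun i => if i == n then b else x i.

Fixpoint Exb (n : nat) (f : (nat -> R) -> R) : R :=
  if n is m.+1 then p * Exb m (fun x => f (upd x m 1))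
                   + (1 - p) * Exb m (fun x => f (upd x m 0))
  else f (fun _ => 0).

Lemma Exb_ext n f g : (forall x, f x = g x) -> Exb n f = Exb n g.
Proof.
elim: n f g => [|n IH] f g H /=; first exact: H.
by congr (_ * _ + _ * _); apply: IH => x; apply: H.
Qed.

Lemma ExbD n f g : Exb n (fun x => f x + g x) = Exb n f + Exb n g.
Proof.
elim: n f g => [|n IH] f g //=.
rewrite (IH (fun x => f (upd x n 1))) (IH (fun x => f (upd x n 0))); ring.
Qed.

Lemma ExbZ n a f : Exb n (fun x => a * f x) = a * Exb n f.
Proof.
elim: n f => [|n IH] f //=.
rewrite (IH (fun x => f (upd x n 1))) (IH (fun x => f (upd x n 0))); ring.
Qed.

Lemma Exb_cst n a : Exb n (fun _ => a) = a.
Proof. elim: n => [|n IH] //=; rewrite IH; ring. Qed.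

Definition binary (x : nat -> R) := forall i, x i = 0 \/ x i = 1.

Lemma binary_upd x n b : binary x -> (b = 0 \/ b = 1) -> binary (upd x n b).
Proof. by move=> hx hb i; rewrite /upd; case: (i == n). Qed.

Lemma Exb_mono n f g : 0 <= p <= 1 ->
  (forall x, binary x -> f x <= g x) -> Exb n f <= Exb n g.
Proof.
move=> /andP[p0 p1].
elim: n f g => [|n IH] f g H /=; first by apply: H => i; left.
have q0 : 0 <= 1 - p by rewrite subr_ge0.
apply: lerD; apply: ler_wpM2l => //; apply: IH => x bx; apply: H;
  apply: binary_upd => //; by [right|left].
Qed.

Definition Ysum (c : nat -> R) (n : nat) (x : nat -> R) : R :=
  \sum_(i < n) c i * (x i - p).

Lemma Ysum_upd c n x b : Ysum c n.+1 (upd x n b) = Ysum c n x + c n * (b - p).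
Proof.
rewrite /Ysum big_ord_recr /= /upd eqxx; congr (_ + _).
apply: eq_bigr => i _; by rewrite ifN // neq_ltn ltn_ord.
Qed.

Definition vv := p * (1 - p).
Definition KK := 3 + vv^-1.

Lemma Exb_Y c n : Exb n (Ysum c n) = 0.
Proof.
elim: n => [|n IH] /=; first by rewrite /Ysum big_ord0.
rewrite (Exb_ext n _ (fun x => Ysum c n x + c n * (1 - p))); last by move=> x; rewrite Ysum_upd.
rewrite (Exb_ext n (fun x => Ysum c n.+1 (upd x n 0)) (fun x => Ysum c n x + c n * (0 - p))); last by move=> x; rewrite Ysum_upd.
rewrite !ExbD !Exb_cst IH; rewrite /vv; ring.
Qed.

Lemma Exb_Y2 c n : Exb n (fun x => Ysum c n x ^+ 2) = vv * \sum_(i < n) c i ^+ 2.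
Proof.
elim: n => [|n IH] /=; first by rewrite /Ysum !big_ord0 expr0n mulr0.
rewrite (Exb_ext n _ (fun x => Ysum c n x ^+ 2 + (2 * c n * (1 - p)) * Ysum c n x + (c n * (1 - p)) ^+ 2)); last by move=> x; rewrite Ysum_upd; ring.
rewrite (Exb_ext n (fun x => Ysum c n.+1 (upd x n 0) ^+ 2) (fun x => Ysum c n x ^+ 2 + (2 * c n * (0 - p)) * Ysum c n x + (c n * (0 - p)) ^+ 2)); last by move=> x; rewrite Ysum_upd; ring.
rewrite !ExbD !ExbZ !Exb_cst IH Exb_Y big_ord_recr /= /vv; ring.
Qed.

Lemma Exb_Y4 c n : 0 < p < 1 ->
  Exb n (fun x => Ysum c n x ^+ 4) <= KK * (Exb n (fun x => Ysum c n x ^+ 2)) ^+ 2.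
Proof.
move=> /andP[p0 p1].
have v0 : 0 < vv by rewrite /vv mulr_gt0 // subr_gt0.
have K3 : 3 <= KK by rewrite /KK lerDl invr_ge0 ltW.
have Kv : 1 <= KK * vv.
  by rewrite /KK mulrDl mulVf ?gt_eqF // lerDr mulr_ge0 // ltW.
elim: n => [|n IH]; first by rewrite /= /Ysum !big_ord0 !expr0n /= mulr0.
rewrite Exb_Y2 Exb_Y2 in IH *; rewrite [Exb n.+1 _]/=.
rewrite (Exb_ext n _ (fun x => Ysum c n x ^+ 4 + (4 * (c n * (1 - p))) * Ysum c n x ^+ 3 + (6 * (c n * (1 - p)) ^+ 2) * Ysum c n x ^+ 2 + (4 * (c n * (1 - p)) ^+ 3) * Ysum c n x + (c n * (1 - p)) ^+ 4)); last by move=> x; rewrite Ysum_upd; ring.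
rewrite (Exb_ext n (fun x => Ysum c n.+1 (upd x n 0) ^+ 4) (fun x => Ysum c n x ^+ 4 + (4 * (c n * (0 - p))) * Ysum c n x ^+ 3 + (6 * (c n * (0 - p)) ^+ 2) * Ysum c n x ^+ 2 + (4 * (c n * (0 - p)) ^+ 3) * Ysum c n x + (c n * (0 - p)) ^+ 4)); last by move=> x; rewrite Ysum_upd; ring.
rewrite !ExbD !ExbZ !Exb_cst Exb_Y !Exb_Y2.
rewrite big_ord_recr /=.
set E4 := Exb n _ ; set E3 := Exb n _; set s := \sum_(i < n) _.
set a := c n.
have s0 : 0 <= s by rewrite /s sumr_ge0 // => i _; rewrite sqr_ge0.
have E2 : 0 <= vv * s by rewrite mulr_ge0 // ltW.
rewrite [X in X <= _](_ : _ = E4 + 6 * a^+2 * vv * (vv * s) + a^+4 * vv * (p^+3 + (1-p)^+3)); last by rewrite /vv; ring.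
have h1 : p ^+ 3 + (1 - p) ^+ 3 <= KK * vv.
  apply: le_trans Kv; rewrite /vv.
  have q0 : 0 < 1 - p by rewrite subr_gt0.
  nra.
have a2 : 0 <= a ^+ 2 by rewrite sqr_ge0.
have a4 : 0 <= a ^+ 4 by rewrite (_ : 4 = 2 * 2)%N // exprM sqr_ge0.
rewrite [X in _ <= X](_ : _ = KK * (vv * s) ^+ 2 + (2 * KK) * a^+2 * vv * (vv * s) + a^+4 * vv * (KK * vv)); last by rewrite /vv; ring.
apply: lerD; first apply: lerD => //.
  apply: ler_wpM2r => //; apply: ler_wpM2r; first exact: ltW.
  apply: ler_wpM2r => //; lra.
apply: ler_wpM2l => //; rewrite mulr_ge0 // ltW //.
Qed.


Lemma pw_ineq (y t a s : R) : 0 <= t -> 0 < a -> 0 < s ->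
  y ^+ 2 / (2 * a) - y ^+ 4 / (8 * a ^+ 3) - y / 2 - t - y ^+ 2 / (2 * s)
  <= s / 2 * (if y < - t then 1 else 0).
Proof.
move=> t0 a0 s0.
have a0' : a != 0 by rewrite gt_eqF.
have s0' : s != 0 by rewrite gt_eqF.
set u := `|y|.
have u0 : 0 <= u by rewrite normr_ge0.
have y2 : y ^+ 2 = u ^+ 2 by rewrite /u real_normK // num_real.
have y4 : y ^+ 4 = u ^+ 4 by rewrite (_ : 4 = 2 * 2)%N // !exprM y2.
have L1 : u ^+ 2 / (2 * a) - u ^+ 4 / (8 * a ^+ 3) <= u / 2.
  rewrite -subr_ge0.
  have -> : u / 2 - (u ^+ 2 / (2 * a) - u ^+ 4 / (8 * a ^+ 3)) =
     u * (u * (u - 2 * a) ^+ 2 + 4 * a * (u - a) ^+ 2) / (8 * a ^+ 3).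
    by field.
  apply: divr_ge0; last by rewrite mulr_ge0 // exprn_ge0 // ltW.
  have a0w : 0 <= a by exact: ltW.
  apply: mulr_ge0 => //; apply: addr_ge0; apply: mulr_ge0 => //;
    by [rewrite sqr_ge0 | rewrite mulr_ge0].
have L2 : u <= u ^+ 2 / (2 * s) + s / 2.
  rewrite -subr_ge0.
  have -> : u ^+ 2 / (2 * s) + s / 2 - u = (u - s) ^+ 2 / (2 * s) by field.
  by rewrite divr_ge0 ?sqr_ge0 // mulr_ge0 // ltW.
have L3 : 0 <= u ^+ 2 / (2 * s) by rewrite divr_ge0 ?sqr_ge0 // mulr_ge0 // ltW.
rewrite y2 y4.
have [yn|yp] := ltrP y 0.
  have uy : u = - y by rewrite /u ltr0_norm.
  case: ifP => H.
    rewrite mulr1; lra.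
  move/negbT: H; rewrite -leNgt => H; rewrite mulr0; lra.
have uy : u = y by rewrite /u ger0_norm.
case: ifP => _; rewrite ?mulr1 ?mulr0; lra.
Qed.


Lemma anticonc (c : nat -> R) (n : nat) (t : R) : 0 < p < 1 -> 0 <= t ->
  0 < vv * \sum_(i < n) c i ^+ 2 ->
  t * (16 * KK) <= Num.sqrt (vv * \sum_(i < n) c i ^+ 2) ->
  (12 * KK ^+ 2)^-1 <= Exb n (fun x => if Ysum c n x < - t then 1 else 0).
Proof.
move=> hp t0 s20 ht.
have /andP[p0 p1] := hp.
have v0 : 0 < vv by rewrite /vv mulr_gt0 // subr_gt0.
have K3 : 3 <= KK by rewrite /KK lerDl invr_ge0 ltW.
have K0 : 0 < KK by apply: lt_le_trans K3.
set s2 := vv * _ in s20 ht.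
set sg := Num.sqrt s2 in ht.
have sg0 : 0 < sg by rewrite sqrtr_gt0.
have sg2 : s2 = sg ^+ 2 by rewrite sqr_sqrtr // ltW.
set a := KK * sg.
set s := 8 * KK * sg.
have a0 : 0 < a by rewrite mulr_gt0.
have s0 : 0 < s by rewrite !mulr_gt0.
have hp' : 0 <= p <= 1 by rewrite !ltW.
have H := @Exb_mono n
  (fun x => Ysum c n x ^+ 2 / (2 * a) - Ysum c n x ^+ 4 / (8 * a ^+ 3) - Ysum c n x / 2 - t - Ysum c n x ^+ 2 / (2 * s))
  (fun x => s / 2 * (if Ysum c n x < - t then 1 else 0)) hp' (fun x _ => pw_ineq _ _ _ _ t0 a0 s0).
rewrite ExbZ in H.
rewrite (Exb_ext n _ (fun x => (2 * a)^-1 * Ysum c n x ^+ 2 + (- (8 * a ^+ 3)^-1) * Ysum c n x ^+ 4 + (- 2^-1) * Ysum c n x + (- t) + (- (2 * s)^-1) * Ysum c n x ^+ 2)) in H; last by move=> x; ring.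
rewrite !ExbD !ExbZ !Exb_cst Exb_Y Exb_Y2 in H.
have H4 := Exb_Y4 c n hp; rewrite Exb_Y2 in H4.
set M4 := Exb n (fun x => Ysum c n x ^+ 4) in H H4.
set E := Exb n _ in H *.
rewrite -/s2 in H H4.
have M4' : M4 / (8 * a ^+ 3) <= sg / (24 * KK).
  apply: (@le_trans _ _ (KK * s2 ^+ 2 / (8 * a ^+ 3))).
    apply: ler_wpM2r => //; rewrite ?invr_ge0 ?mulr_ge0 // ?exprn_ge0 // ltW //.
  rewrite sg2 /a.
  have -> : KK * (sg ^+ 2) ^+ 2 / (8 * (KK * sg) ^+ 3) = sg / (8 * KK ^+ 2).
    by field; rewrite !gt_eqF.
  apply: ler_wpM2l; first exact: ltW.
  rewrite lef_pV2 ?posrE ?mulr_gt0 ?exprn_gt0 //.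
  rewrite expr2 mulrA ler_pM2r //; lra.
have e1 : (2 * a)^-1 * s2 = sg / (2 * KK) by rewrite sg2 /a; field; rewrite !gt_eqF.
have e2 : (2 * s)^-1 * s2 = sg / (16 * KK) by rewrite sg2 /s; field; rewrite !gt_eqF.
have e3 : s / 2 = 4 * KK ^+ 2 * (sg / KK) by rewrite /s; field; rewrite !gt_eqF.
have e4 : t <= sg / (16 * KK) by rewrite ler_pdivlMr // mulr_gt0.
have e5 : sg / (24 * KK) = (sg / KK) / 24 by field; rewrite !gt_eqF.
have e6 : sg / (16 * KK) = (sg / KK) / 16 by field; rewrite !gt_eqF.
have e7 : sg / (2 * KK) = (sg / KK) / 2 by field; rewrite !gt_eqF.
rewrite e3 in H.
set w := sg / KK in H e5 e6 e7.
have w0 : 0 < w by rewrite divr_gt0.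
have H' : w / 3 <= 4 * KK ^+ 2 * w * E.
  apply: le_trans H.
  have : (8 * a ^+ 3)^-1 * M4 <= w / 24 by rewrite -e5 mulrC.
  rewrite e6 in e4 e2; rewrite e7 in e1.
  move: e1 e2 e4; rewrite mulr0.
  lra.
have z0 : 0 < 4 * KK ^+ 2 * w.
  by apply: mulr_gt0 => //; apply: mulr_gt0 => //; apply: exprn_gt0.
have -> : (12 * KK ^+ 2)^-1 = (4 * KK ^+ 2 * w)^-1 * (w / 3).
  by field; rewrite !gt_eqF.
by rewrite ler_pdivrMl // mulrA.
Qed.


Lemma Exb_compl n f : Exb n (fun x => 1 - f x) = 1 - Exb n f.
Proof.
rewrite (Exb_ext n _ (fun x => 1 + (-1) * f x)); last by move=> x; ring.
by rewrite ExbD ExbZ Exb_cst mulN1r.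
Qed.

Lemma Exb_prod m : Exb m (fun x => \prod_(i < m) (1 - x i)) = (1 - p) ^+ m.
Proof.
elim: m => [|m IH] /=; first by rewrite big_ord0.
rewrite (Exb_ext m _ (fun x => 0 * \prod_(i < m) (1 - x i))); last first.
  move=> x; rewrite big_ord_recr /= /upd eqxx subrr mulr0 mul0r //.
rewrite (Exb_ext m (fun x => \prod_(i < m.+1) (1 - upd x m 0 i)) (fun x => 1 * \prod_(i < m) (1 - x i))); last first.
  move=> x; rewrite big_ord_recr /= /upd eqxx subr0 mulr1 mul1r.
  by apply: eq_bigr => i _; rewrite ifN // neq_ltn ltn_ord.
rewrite !ExbZ IH exprS; ring.
Qed.
End ExSec.

Arguments upd {R}.
Arguments Exb {R}.
Arguments Ysum {R}.
Arguments vv {R}.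
Arguments KK {R}.
Section Prob.
Variables (d : measure_display) (T : measurableType d) (R : realType)
  (P : probability T R) (p : R) (beta : nat -> T -> R).
Hypothesis hb : forall i, bernoulli_rv P p (beta i).
Hypothesis hind : mutually_independent P beta.

Definition vec n (w : T) : nat -> R := fun i => if (i < n)%N then beta i w else 0.
Definition ev n (B : set (nat -> R)) : set T := [set w | B (vec n w)].
Definition rect (J : seq nat) (C : nat -> set R) : set T :=
  \big[setI/setT]_(j <- J) (beta j @^-1` C j).
Definition Pr (J : seq nat) (C : nat -> set R) : R :=
  \prod_(j <- J) fine (P (beta j @^-1` C j)).

Lemma vecS n w : vec n.+1 w = upd (vec n w) n (beta n w).
Proof.
apply: funext => i; rewrite /vec /upd ltnS leq_eqVlt.
by case: eqP => [->|]; rewrite ?ltnn.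
Qed.

Lemma meas_pre i C : measurable C -> measurable (beta i @^-1` C).
Proof. by move=> mC; rewrite -[X in measurable X]setTI; apply: (hb i).1. Qed.

Lemma P1 i : P (beta i @^-1` [set 1]) = p%:E.
Proof. exact: (hb i).2.2. Qed.

Lemma P0 i : P (beta i @^-1` [set 0]) = (1 - p)%:E.
Proof.
have -> : beta i @^-1` [set 0] = ~` (beta i @^-1` [set 1]).
  apply/seteqP; split => w /=.
    by move=> -> h; move: (@oner_neq0 R); rewrite h eqxx.
  by case: ((hb i).2.1 w) => // ->.
by rewrite probability_setC ?P1 ?EFinB //; apply: meas_pre.
Qed.

Lemma Pfin A : measurable A -> (fine (P A))%:E = P A.
Proof. by move=> mA; rewrite fineK // fin_num_measure. Qed.

Lemma rect_meas J C : (forall j, measurable (C j)) -> measurable (rect J C).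
Proof. by move=> mC; apply: bigsetI_measurable => i _; apply: meas_pre. Qed.

Lemma indep' J C : uniq J -> (forall j, measurable (C j)) ->
  P (rect J C) = (Pr J C)%:E.
Proof.
move=> uJ mC; rewrite /rect hind // /Pr -prodEFin.
by apply: eq_bigr => j _; rewrite Pfin //; apply: meas_pre.
Qed.


Definition ind (B : set (nat -> R)) (x : nat -> R) : R := (x \in B)%:R.

Lemma ind_eq B B' x x' : (B x <-> B' x') -> ind B x = ind B' x'.
Proof.
move=> h; rewrite /ind; case: (pselect (B x)) => hx.
  by rewrite !mem_set //; apply/h.
by rewrite !memNset // => /h.
Qed.

Lemma rect_ext J C C' : (forall j, j \in J -> C j = C' j) -> rect J C = rect J C'.
Proof. by move=> h; apply: eq_big_seq => j /h ->. Qed.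

Lemma Pr_ext J C C' : (forall j, j \in J -> C j = C' j) -> Pr J C = Pr J C'.
Proof. by move=> h; apply: eq_big_seq => j /h ->. Qed.

Lemma link n : forall B J C, uniq J -> (forall j, j \in J -> (n <= j)%N) ->
  (forall j, measurable (C j)) ->
  measurable (ev n B) /\ P (ev n B `&` rect J C) = (Exb p n (ind B) * Pr J C)%:E.
Proof.
elim: n => [|n IH] B J C uJ hJ mC.
  have e0 : forall w, vec 0 w = (fun _ => 0) by [].
  case: (pselect (B (fun _ => 0))) => HB.
    have -> : ev 0 B = setT by apply/seteqP; split => w //= _; rewrite e0.
    split => //; rewrite setTI indep' //= /ind.
    by rewrite (_ : (fun _ => 0) \in B) ?mul1r //; apply/mem_set.
  have -> : ev 0 B = set0 by apply/seteqP; split => w //=; rewrite e0.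
  split => //; rewrite set0I measure0 /= /ind.
  by rewrite memNset // mul0r.
set B1 := [set x | B (upd x n 1)].
set B0 := [set x | B (upd x n 0)].
set C1 := fun j => if j == n then [set 1 : R] else C j.
set C0 := fun j => if j == n then [set 0 : R] else C j.
have nJ : n \notin J by apply/negP => /hJ; rewrite ltnn.
have uJ' : uniq (n :: J) by rewrite /= nJ.
have hJ' : forall j, j \in n :: J -> (n <= j)%N.
  move=> j; rewrite inE => /orP[/eqP -> //|/hJ]; exact: ltnW.
have mC1 : forall j, measurable (C1 j).
  by move=> j; rewrite /C1; case: (j == n) => //; apply: measurable_set1.
have mC0 : forall j, measurable (C0 j).
  by move=> j; rewrite /C0; case: (j == n) => //; apply: measurable_set1.
have [m1 e1] := IH B1 (n :: J) C1 uJ' hJ' mC1.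
have [m0 e0] := IH B0 (n :: J) C0 uJ' hJ' mC0.
have [m1' _] := IH B1 [::] C (erefl _) (fun j => ltac:(by [])) mC.
have [m0' _] := IH B0 [::] C (erefl _) (fun j => ltac:(by [])) mC.
have eJ1 : forall j, j \in J -> C1 j = C j.
  by move=> j jJ; rewrite /C1 ifN //; apply: contraNneq nJ => <-.
have eJ0 : forall j, j \in J -> C0 j = C j.
  by move=> j jJ; rewrite /C0 ifN //; apply: contraNneq nJ => <-.
have evS : ev n.+1 B = (ev n B1 `&` beta n @^-1` [set 1]) `|` (ev n B0 `&` beta n @^-1` [set 0]).
  apply/seteqP; split => w /=; rewrite /ev /= vecS.
    by case: ((hb n).2.1 w) => ->; [right|left].
  by case => -[h ->].
have mp1 := @meas_pre n _ (measurable_set1 (1 : R)).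
have mp0 := @meas_pre n _ (measurable_set1 (0 : R)).
split; first by rewrite evS; apply: measurableU; apply: measurableI.
rewrite evS setIUl -!setIA.
have r1 : beta n @^-1` [set 1] `&` rect J C = rect (n :: J) C1.
  rewrite /rect big_cons; congr (_ `&` _); first by rewrite /C1 eqxx.
  by apply: eq_big_seq => j /eJ1 ->.
have r0 : beta n @^-1` [set 0] `&` rect J C = rect (n :: J) C0.
  rewrite /rect big_cons; congr (_ `&` _); first by rewrite /C0 eqxx.
  by apply: eq_big_seq => j /eJ0 ->.
rewrite r1 r0 measureU; first last.
- apply/seteqP; split => w //=.
  rewrite /rect !big_cons /C1 /C0 eqxx => -[[_ [/= h1 _]] [_ [/= h0 _]]].
  by move: (@oner_neq0 R); rewrite -h1 h0 eqxx.
- by apply: measurableI => //; apply: rect_meas.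
- by apply: measurableI => //; apply: rect_meas.
transitivity ((Exb p n (ind B1) * Pr (n :: J) C1)%:E + (Exb p n (ind B0) * Pr (n :: J) C0)%:E)%E; first by congr (_ + _).
rewrite /Pr !big_cons.
rewrite (eq_big_seq (fun j => fine (P (beta j @^-1` C j))) (F1 := fun j => fine (P (beta j @^-1` C1 j)))); last by move=> j /eJ1 ->.
rewrite (eq_big_seq (fun j => fine (P (beta j @^-1` C j))) (F1 := fun j => fine (P (beta j @^-1` C0 j)))); last by move=> j /eJ0 ->.
rewrite /C1 /C0 eqxx P1 P0 /= -EFinD; congr EFin.
rewrite (@Exb_ext R p n (fun x => ind B (upd x n 1)) (ind B1)); last first.
  by move=> x; apply: ind_eq.
rewrite (@Exb_ext R p n (fun x => ind B (upd x n 0)) (ind B0)); last first.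
  by move=> x; apply: ind_eq.
ring.
Qed.

Lemma link0 n B : measurable (ev n B) /\ P (ev n B) = (Exb p n (ind B))%:E.
Proof.
have [m e] := @link n B [::] (fun _ => setT) (erefl _) (fun j => ltac:(by [])) (fun _ => measurableT).
split => //; move: e; rewrite /rect /Pr !big_nil setIT mulr1 //.
Qed.

Lemma sum_trunc (f : nat -> R) m n : (m <= n)%N -> (forall i, (m <= i)%N -> f i = 0) ->
  \sum_(i < n) f i = \sum_(i < m) f i.
Proof.
move=> mn h; rewrite -!(big_mkord xpredT) (big_cat_nat (leq0n m) mn) /=.
rewrite [X in _ + X](_ : _ = 0) ?addr0 //.
by rewrite big_nat_cond; apply: big1 => i /andP[/andP[mi _] _]; exact: h.
Qed.

Lemma bern_ineq (x : R) k : 0 <= x -> 1 + k%:R * x <= (1 + x) ^+ k.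
Proof.
move=> x0; elim: k => [|k IH]; first by rewrite mul0r addr0 expr0.
rewrite exprS -natr1 mulrDl mul1r.
apply: (@le_trans _ _ ((1 + x) * (1 + k%:R * x))); last first.
  by apply: ler_wpM2l => //; apply: addr_ge0.
have : 0 <= k%:R * x * x by rewrite mulr_ge0 // mulr_ge0.
lra.
Qed.

Lemma lower_bound : 0 < p < 1 -> exists c, stake_seq c /\
  ((2^-1)%:E < P [set w | (p <= S_gamma beta c w)%R])%E.
Proof.
move=> hp; have /andP[p0 p1] := hp.
set m := Num.trunc (p^-1).
have pi1 : 1 <= p^-1 by rewrite invf_ge1 // ltW.
have m1 : (0 < m)%N by rewrite truncn_gt0.
have mle : m%:R <= p^-1 by rewrite truncn_le invr_ge0 ltW.
have mlt : p^-1 < m.+1%:R by apply: truncnS_gt.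
have m0 : 0 < m%:R :> R by rewrite ltr0n.
have pm : p <= m%:R^-1.
  by rewrite -(invrK p) lef_pV2 ?posrE ?invr_gt0.
set c := fun i => if (i < m)%N then (m%:R : R)^-1 else 0.
have c0 : forall i, 0 <= c i by move=> i; rewrite /c; case: ifP => // _; rewrite invr_ge0 ltW.
have ctail : forall i, (m <= i)%N -> c i = 0 by move=> i mi; rewrite /c ltnNge mi.
exists c; split.
  split => //; split.
    move=> i; rewrite /c; case: ifP => h; last by case: ifP => // _; rewrite invr_ge0 ltW.
    by rewrite (ltn_trans (ltnSn i) h).
  apply: cvg_near_cst; exists m => // n /= mn.
  rewrite /series /= big_mkord (sum_trunc _ _ _ mn ctail).
  rewrite (eq_bigr (fun _ => (m%:R : R)^-1)); last by move=> i _; rewrite /c ltn_ord.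
  by rewrite sumr_const card_ord -[_ *+ _]mulr_natr mulVf // gt_eqF.
set B := [set x : nat -> R | p <= \sum_(i < m) c i * x i].
have eS : [set w | p <= S_gamma beta c w] = ev m B.
  have eL : forall w, limn (fun n => \sum_(i < n) c i * beta i w) = \sum_(i < m) c i * beta i w.
    move=> w; apply: (@lim_near_cst R (@Rhausdorff R) nat \oo _ (\sum_(i < m) c i * beta i w) (fun n => \sum_(i < n) c i * beta i w)); exists m => // n /= mn.
    by apply: (sum_trunc (fun i => c i * beta i w) _ _ mn) => i /ctail ->; exact: mul0r.
  have eV : forall w, \sum_(i < m) c i * vec m w i = \sum_(i < m) c i * beta i w.
    by move=> w; apply: eq_bigr => i _; rewrite /vec ltn_ord.
  by apply/seteqP; split => w /=; rewrite /ev /S_gamma eL /B /= eV.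
rewrite eS; have [_ ->] := link0 m B; rewrite lte_fin.
have hp' : 0 <= p <= 1 by rewrite !ltW.
apply: (@lt_le_trans _ _ (Exb p m (fun x => 1 - \prod_(i < m) (1 - x i)))); last first.
  apply: Exb_mono => // x bx.
  have f0 : forall i, 0 <= 1 - x i by move=> i; case: (bx i) => ->; rewrite ?subr0 ?subrr.
  rewrite /ind; case: (pselect (B x)) => hB.
    by rewrite mem_set // lerBlDr lerDl prodr_ge0.
  rewrite memNset // big1 ?subrr // => i _.
  case: (bx i) => [->|h1]; first by rewrite subr0.
  exfalso; apply: hB; rewrite /B /=.
  apply: (le_trans pm); rewrite (bigD1 i) //= h1 mulr1 /c ltn_ord lerDl.
  by apply: sumr_ge0 => j _; apply: mulr_ge0; [exact: c0 | case: (bx j) => ->].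
rewrite Exb_compl Exb_prod.
suff : (1 - p) ^+ m < 2^-1 by lra.
have q0 : 0 <= 1 - p by rewrite subr_ge0 ltW.
have hb2 : 2 <= (1 + (m%:R : R)^-1) ^+ m.
  have := @bern_ineq (m%:R^-1) m; rewrite mulfV ?gt_eqF // => h.
  have hm : 0 <= m%:R^-1 :> R by rewrite invr_ge0 ltW.
  have := h hm. lra.
have hq : (1 - p) * (1 + m%:R^-1) < 1.
  have : 1 < p * m.+1%:R by rewrite -ltr_pdivrMl // mulr1.
  rewrite -natr1; move=> h.
  have -> : (1 - p) * (1 + (m%:R : R)^-1) = ((1 - p) * (m%:R + 1)) / m%:R.
    by field; rewrite gt_eqF.
  rewrite ltr_pdivrMr // mul1r.
  lra.
have : ((1 - p) * (1 + m%:R^-1)) ^+ m < 1.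
  have hx0 : 0 <= (1 - p) * (1 + (m%:R : R)^-1).
    by rewrite mulr_ge0 // addr_ge0 // invr_ge0 ltW.
  by rewrite exprn_ilt1 // -?lt0n.
rewrite exprMn => h.
have : (1 - p) ^+ m * 2 <= (1 - p) ^+ m * (1 + m%:R^-1) ^+ m.
  by apply: ler_wpM2l => //; apply: exprn_ge0.
lra.
Qed.

Lemma sum_split (f : nat -> R) n k : (n <= k)%N ->
  \sum_(i < k) f i = \sum_(i < n) f i + \sum_(n <= i < k) f i.
Proof. by move=> nk; rewrite -!(big_mkord xpredT) (big_cat_nat (leq0n n) nk). Qed.

Lemma sum_mono (f : nat -> R) n k : (forall i, 0 <= f i) -> (n <= k)%N ->
  \sum_(i < n) f i <= \sum_(i < k) f i.
Proof. by move=> f0 nk; rewrite (sum_split _ _ _ nk) lerDl sumr_ge0. Qed.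

Lemma Sg_facts c w : stake_seq c ->
  cvgn (fun k => \sum_(i < k) c i * beta i w) /\
  forall n, S_gamma beta c w <= \sum_(i < n) c i * beta i w + (1 - series c n).
Proof.
move=> [c0 [cdec ccvg]].
set C := series c.
have CE : forall n, C n = \sum_(i < n) c i by move=> n; rewrite /C /series /= big_mkord.
have Cnd : {homo C : n m / (n <= m)%N >-> n <= m}.
  by move=> n m nm; rewrite !CE; apply: sum_mono.
have C1 : forall n, C n <= 1.
  move=> n; have := nondecreasing_cvgn_le Cnd (cvgP _ ccvg) n.
  by rewrite (cvg_lim (@Rhausdorff R) ccvg).
set g := fun k => \sum_(i < k) c i * beta i w.
have f0 : forall i, 0 <= c i * beta i w.
  by move=> i; rewrite mulr_ge0 //; case: ((hb i).2.1 w) => ->.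
have fle : forall i, c i * beta i w <= c i.
  by move=> i; case: ((hb i).2.1 w) => ->; rewrite ?mulr0 ?mulr1.
have gnd : {homo g : n m / (n <= m)%N >-> n <= m}.
  by move=> n m nm; apply: (sum_mono (fun i => c i * beta i w) _ _ f0 nm).
have gC : forall k, g k <= C k by move=> k; rewrite CE; apply: ler_sum => i _.
have gc : cvgn g.
  apply: nondecreasing_is_cvgn => //; exists 1 => _ [k _ <-].
  exact: le_trans (gC k) (C1 k).
split => // n; rewrite /S_gamma -/g.
apply: limr_le => //; exists n => // k /= nk.
rewrite /g (sum_split (fun i => c i * beta i w) _ _ nk) lerD2l.
apply: (@le_trans _ _ (\sum_(n <= i < k) c i)); first by apply: ler_sum => i _.
have := C1 k; rewrite !CE (sum_split _ _ _ nk); lra.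
Qed.

Lemma upper_bound : 0 < p < 1 -> forall c, stake_seq c ->
  (P [set w | (p <= S_gamma beta c w)%R] <= (1 - (12 * KK p ^+ 2)^-1)%:E)%E.
Proof.
move=> hp c hc; have /andP[p0 p1] := hp.
have [c0 [cdec ccvg]] := hc.
set C := series c.
have CE : forall n, C n = \sum_(i < n) c i by move=> n; rewrite /C /series /= big_mkord.
have Cnd : {homo C : n m / (n <= m)%N >-> n <= m}.
  by move=> n m nm; rewrite !CE; apply: sum_mono.
have C1 : forall n, C n <= 1.
  move=> n; have := nondecreasing_cvgn_le Cnd (cvgP _ ccvg) n.
  by rewrite (cvg_lim (@Rhausdorff R) ccvg).
have v0 : 0 < vv p by rewrite /vv mulr_gt0 // subr_gt0.
have K3 : 3 <= KK p by rewrite /KK lerDl invr_ge0 ltW.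
have K0 : 0 < KK p by apply: lt_le_trans K3.
have cle : forall i, c i <= c 0.
  by elim=> [//|i IH]; apply: le_trans (cdec i) IH.
have c00 : 0 < c 0.
  rewrite lt_neqAle c0 andbT; apply/eqP => h0.
  have cz : forall i, c i = 0 by move=> i; apply/eqP; rewrite eq_le c0 andbT {1}h0 cle.
  move/cvgrPdist_lt: ccvg => /(_ (2^-1)) [//|N _ hN].
  have := hN N (leqnn N); rewrite /= /series /= big1 ?subr0 ?normr1; [lra | by move=> i _; apply: cz].
set eta := c 0 * Num.sqrt (vv p) / (16 * KK p).
have eta0 : 0 < eta by rewrite /eta divr_gt0 ?mulr_gt0 // sqrtr_gt0.
move/cvgrPdist_lt: ccvg => /(_ eta eta0) [N1 _ hN1].
set n := N1.+1.
set r := 1 - C n.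
have r0 : 0 <= r by rewrite /r subr_ge0.
have reta : r < eta by apply: le_lt_trans (hN1 n (leqnSn N1)); rewrite ler_norm.
set t := (1 - p) * r.
have t0 : 0 <= t by rewrite /t mulr_ge0 // subr_ge0 ltW.
have tr : t <= r by rewrite /t; nra.
have sq : c 0 ^+ 2 <= \sum_(i < n) c i ^+ 2.
  by rewrite /n big_ord_recl /= lerDl sumr_ge0 // => i _; rewrite sqr_ge0.
have s20 : 0 < vv p * \sum_(i < n) c i ^+ 2.
  by rewrite mulr_gt0 //; apply: lt_le_trans sq; rewrite exprn_gt0.
have ht : t * (16 * KK p) <= Num.sqrt (vv p * \sum_(i < n) c i ^+ 2).
  apply: (@le_trans _ _ (Num.sqrt (vv p * c 0 ^+ 2))); last first.
    rewrite ler_sqrt; last exact: ltW.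
    by apply: ler_wpM2l => //; exact: ltW.
  rewrite sqrtrM; last exact: ltW.
  rewrite sqrtr_sqr ger0_norm //.
  apply: (@le_trans _ _ (eta * (16 * KK p))).
    apply: ler_wpM2r; first by rewrite mulr_ge0 // ltW.
    exact: le_trans tr (ltW reta).
  by rewrite /eta mulfVK ?gt_eqF ?mulr_gt0 // mulrC.
have hA := @anticonc R p c n t hp t0 s20 ht.
set B := [set x : nat -> R | - t <= Ysum p c n x].
have [mev ePev] := link0 n B.
have mS : measurable [set w | p <= S_gamma beta c w].
  have mf : measurable_fun setT (S_gamma beta c).
    apply: (@measurable_realfun.measurable_fun_cvg _ _ _ _ (fun k w => \sum_(i < k) c i * beta i w)).
      move=> k; apply: measurable_sum => i.
      apply: measurable_realfun.measurable_funM; first exact: measurable_cst.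
      exact: (hb i).1.
    by move=> w _; have [gc _] := Sg_facts c w hc; exact: gc.
  have := mf measurableT _ (measurable_itv `[p, +oo[); rewrite setTI.
  congr measurable; apply/seteqP; split => w /=; rewrite in_itv /= andbT //.
have sub : [set w | p <= S_gamma beta c w] `<=` ev n B.
  move=> w /= hS; rewrite /ev /B /=.
  have [_ hSn] := Sg_facts c w hc.
  have := hSn n; rewrite -/C -/r => h2.
  have eY : Ysum p c n (vec n w) = \sum_(i < n) c i * beta i w - p * C n.
    rewrite /Ysum CE mulr_sumr -sumrB; apply: eq_bigr => i _.
    by rewrite /vec ltn_ord mulrBr [p * _]mulrC.
  rewrite eY /t /r.
  have : p <= \sum_(i < n) c i * beta i w + r by apply: le_trans h2.
  rewrite /r; nra.
apply: (@le_trans _ _ (P (ev n B))).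
  by apply: le_measure => //; rewrite inE.
rewrite ePev lee_fin.
rewrite (@Exb_ext R p n (ind B) (fun x => 1 - (if Ysum p c n x < - t then 1 else 0))); last first.
  move=> x; rewrite /ind; case: (pselect (B x)) => hB.
    by rewrite mem_set // ltNge hB subr0.
  have hlt : Ysum p c n x < - t by rewrite ltNge; apply/negP.
  by rewrite memNset // hlt subrr.
rewrite Exb_compl; lra.
Qed.
End Prob.

Theorem proposition5 (d : measure_display) (T : measurableType d)
  (R : realType) (P : probability T R) (p : R) (beta : nat -> T -> R) :
  0 < p < 1 ->
  (forall i, bernoulli_rv P p (beta i)) ->
  mutually_independent P beta ->
  ((2^-1)%:E < pi_fun P beta p /\ pi_fun P beta p < 1%:E)%E.
Proof.
move=> hp hb hind; split.
  have [c [hc hlt]] := @lower_bound d T R P p beta hb hind hp.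
  apply: (lt_le_trans hlt); apply: ereal_sup_ubound; by exists c.
apply: (@le_lt_trans _ _ (1 - (12 * KK p ^+ 2)^-1)%:E).
  apply: ub_ereal_sup => _ [c hc <-]; exact: (@upper_bound d T R P p beta hb hind hp c hc).
have /andP[p0 p1] := hp.
have v0 : 0 < vv p by rewrite /vv mulr_gt0 // subr_gt0.
have K0 : 0 < KK p by rewrite /KK addr_gt0 // invr_gt0.
have : 0 < (12 * KK p ^+ 2)^-1 by rewrite invr_gt0 mulr_gt0 // exprn_gt0.
rewrite lte_fin; lra.
Qed.
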